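(* For every integer $d\ge3$, the set $\mathfrak P_d$ is contained in $[0,2d-4]^{2d-4}\times[-d+2,d-2]$; hence $\mathfrak P_d$ is a bounded convex polytope and $\mathfrak P_d\cap\mathbb Z^{2d-3}$ is finite.
   Context: $\mathfrak P_d\subseteq\mathbb R^{2d-3}$ is the set of all $(x_1,\dots,x_{d-2},y_1,\dots,y_{d-2},z)\in\mathbb R^{2d-3}$ satisfying: $x_j-x_{j+1}\ge0$ and $y_j-y_{j+1}\ge0$ for $j\in\{1,\dots,d-3\}$; $x_j\ge0$, $y_j\ge0$ for $j\in\{1,\dots,d-2\}$; $j(z+d-1-j)+\sum_{i=0}^{j-2}x_{d-2-i}-\sum_{i=1}^{j}y_i\ge0$ for $j\in\{1,\dots,d-2\}$; and $\sum_{i=1}^{d-2}y_i-\sum_{i=1}^{d-2}x_i=z(d-1)$. *)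

(* Defs.v *)
From HB Require Import structures.
From mathcomp Require Import all_boot all_order all_algebra.
Set Implicit Arguments. Unset Strict Implicit. Unset Printing Implicit Defensive.
Import Order.TTheory GRing.Theory Num.Theory.
Local Open Scope ring_scope.

(* Points of R^(2d-3) are row vectors 'rV[R]_(2d-3), coordinates numbered
   0 .. 2d-4 (0-based).  Layout: (x_1..x_{d-2}, y_1..y_{d-2}, z). *)
Definition dimP (d : nat) : nat := (2 * d - 3)%N.

(* k-th coordinate (0-based) of p, 0 if out of range *)
Definition coordp (R : pzRingType) (n : nat) (p : 'rV[R]_n) (k : nat) : R :=
  match @insub nat (fun k => k < n)%N 'I_n k with
  | Some i => p ord0 i
  | None => 0
  end.

Definition xc (R : pzRingType) (d : nat) (p : 'rV[R]_(dimP d)) (j : nat) : R :=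
  coordp p (j - 1)%N.
Definition yc (R : pzRingType) (d : nat) (p : 'rV[R]_(dimP d)) (j : nat) : R :=
  coordp p (d - 2 + (j - 1))%N.
Definition zc (R : pzRingType) (d : nat) (p : 'rV[R]_(dimP d)) : R :=
  coordp p (2 * d - 4)%N.

Definition inPd (R : realFieldType) (d : nat) (p : 'rV[R]_(dimP d)) : Prop :=
  [/\ (forall j, (1 <= j <= d - 3)%N -> 0 <= xc p j - xc p j.+1),
      (forall j, (1 <= j <= d - 3)%N -> 0 <= yc p j - yc p j.+1),
      (forall j, (1 <= j <= d - 2)%N -> 0 <= xc p j /\ 0 <= yc p j),
      (forall j, (1 <= j <= d - 2)%N ->
         0 <= j%:R * (zc p + d%:R - 1 - j%:R)
              + \sum_(0 <= i < j - 1) xc p (d - 2 - i)%N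
              - \sum_(1 <= i < j.+1) yc p i) &
      \sum_(1 <= i < d - 1) yc p i - \sum_(1 <= i < d - 1) xc p i
        = zc p * (d%:R - 1)].

Definition inBox (R : realFieldType) (d : nat) (p : 'rV[R]_(dimP d)) : Prop :=
  (forall k, (k < 2 * d - 4)%N ->
      0 <= coordp p k <= 2%:R * d%:R - 4%:R) /\
  - (d%:R - 2%:R) <= zc p <= d%:R - 2%:R.

Definition is_int_point (R : realFieldType) (n : nat) (p : 'rV[R]_n) : Prop :=
  forall i : 'I_n, exists m : int, p ord0 i = m%:~R.

(* Main.v *)
Require Import Defs.
From HB Require Import structures.
From mathcomp Require Import all_boot all_order all_algebra.
From mathcomp Require Import ring lra zify.
Import Order.TTheory GRing.Theory Num.Theory.
Local Open Scope ring_scope.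

Lemma coordpD (R : realFieldType) n (p q : 'rV[R]_n) a b k :
  coordp (a *: p + b *: q) k = a * coordp p k + b * coordp q k.
Proof.
rewrite /coordp; case: insubP => [i _ _|_]; rewrite ?mxE //.
by rewrite !mulr0 addr0.
Qed.

Lemma sum_rev (R : realFieldType) (F : nat -> R) m :
  \sum_(0 <= i < m) F (m.+1 - i)%N = \sum_(2 <= i < m.+2) F i.
Proof.
elim: m => [|m IH]; first by rewrite !big_geq.
rewrite big_nat_recl // big_nat_recr //=.
under eq_bigr => i _ do rewrite subSS.
by rewrite IH addrC.
Qed.

Lemma coordp_ord (R : realFieldType) n (p : 'rV[R]_n) (i : 'I_n) :
  coordp p i = p ord0 i.
Proof. by rewrite /coordp valK. Qed.

Lemma sum_rev2 (R : realFieldType) (F : nat -> R) n : (0 < n)%N ->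
  \sum_(0 <= i < n - 1) F (n - i)%N = \sum_(2 <= i < n.+1) F i.
Proof. by case: n => // m _; rewrite subn1 /= sum_rev. Qed.
Lemma mono (R : realFieldType) (f : nat -> R) n :
  (forall j, (0 < j <= n.-1)%N -> 0 <= f j - f j.+1) ->
  forall i, (0 < i <= n)%N -> f i <= f 1%N.
Proof.
move=> H; elim=> [|i IH] // /andP [h1 h2].
case: (posnP i) => [->|hi]; first by rewrite lexx.
have hi2 : (0 < i <= n.-1)%N by apply/andP; split=> //; rewrite -ltnS prednK // (leq_trans _ h2).
have hi3 : (0 < i <= n)%N by rewrite hi /= ltnW.
have := IH hi3; have := H i hi2; lra.
Qed.

Lemma box (R : realFieldType) n (hn : (1 <= n)%N) (p : 'rV[R]_(dimP n.+2)) :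
  inPd p -> inBox p.
Proof.
case=> H1 H2 H3 H4 H5.
have e3 : (n.+2 - 3 = n.-1)%N by lia.
rewrite e3 in H1 H2.
have e2 : (n.+2 - 2 = n)%N by lia.
rewrite e2 in H3 H4.
have e1 : (n.+2 - 1 = n.+1)%N by lia.
rewrite e1 in H5.
have hx := @mono _ _ _ H1; have hy := @mono _ _ _ H2.
have Hj1 := H4 1%N hn; rewrite big_geq // big_nat1 in Hj1.
have hnn : (0 < n <= n)%N by rewrite hn leqnn.
have Hjn := H4 n hnn.
rewrite sum_rev2 // in Hjn.
have hX : \sum_(1 <= i < n.+1) xc p i = xc p 1 + \sum_(2 <= i < n.+1) xc p i by rewrite big_ltn.
rewrite hX in H5.
have hd : (n.+2)%:R = n%:R + 2 :> R by rewrite -addn2 natrD.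
rewrite hd in Hj1 Hjn H5.
move: Hjn H5; set N := n%:R; set z := zc p; set Sx := \sum_(2 <= i < n.+1) xc p i;
  set Sy := \sum_(1 <= i < n.+1) yc p i; move=> Hjn H5.
have key : 0 <= N - z - xc p 1.
  have -> : N - z - xc p 1 = (N * (z + (N + 2) - 1 - N) + Sx - Sy) + ((Sy - (xc p 1 + Sx)) - z * (N + 2 - 1)) by ring.
  by rewrite H5 subrr addr0.
have [x1p y1p] := H3 1%N hn.
have N1 : 1 <= N by rewrite ler1n.
rewrite -/N -/z in Hj1.
have zlo : - N <= z - yc p 1 by lra.
have zhi : xc p 1 <= N - z by lra.
clear Hjn H5 hX key Hj1.
rewrite /inBox hd -/N -/z; split; last by lra.
move=> k hk.
have hk' : (k < n + n)%N by move: hk; clear; lia.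
case: (ltnP k n) => hkn.
  have -> : coordp p k = xc p k.+1 by rewrite /xc subn1.
  have := hx k.+1 hkn; have := (H3 k.+1 hkn).1; lra.
have -> : coordp p k = yc p (k - n).+1.
  by rewrite /yc (_ : (n.+2 - 2 + ((k - n).+1 - 1) = k)%N) //; move: hkn; clear; lia.
have hkk : (0 < (k - n).+1 <= n)%N by move: hk'; clear; lia.
have := hy _ hkk; have := (H3 _ hkk).2; lra.
Qed.

Lemma box' (R : realFieldType) d (hd : (3 <= d)%N) (p : 'rV[R]_(dimP d)) :
  inPd p -> inBox p.
Proof. by case: d hd p => [|[|n]] // hd p; apply: box. Qed.

Lemma convex (R : realFieldType) d (p q : 'rV[R]_(dimP d)) t :
  inPd p -> inPd q -> 0 <= t <= 1 -> inPd (t *: p + (1 - t) *: q).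
Proof.
move=> [P1 P2 P3 P4 P5] [Q1 Q2 Q3 Q4 Q5] /andP [t0 t1].
have xD j : xc (t *: p + (1 - t) *: q) j = t * xc p j + (1 - t) * xc q j by apply: coordpD.
have yD j : yc (t *: p + (1 - t) *: q) j = t * yc p j + (1 - t) * yc q j by apply: coordpD.
have zD : zc (t *: p + (1 - t) *: q) = t * zc p + (1 - t) * zc q by apply: coordpD.
have t1' : 0 <= 1 - t by lra.
split.
- move=> j hj; rewrite !xD; have := P1 j hj; have := Q1 j hj.
  set a := xc p j; set b := xc p j.+1; set c := xc q j; set e := xc q j.+1.
  move=> h1 h2.
  rewrite (_ : _ - _ = t * (a - b) + (1 - t) * (c - e)); last by ring.
  by rewrite addr_ge0 // mulr_ge0.
- move=> j hj; rewrite !yD; have := P2 j hj; have := Q2 j hj.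
  set a := yc p j; set b := yc p j.+1; set c := yc q j; set e := yc q j.+1.
  move=> h1 h2.
  rewrite (_ : _ - _ = t * (a - b) + (1 - t) * (c - e)); last by ring.
  by rewrite addr_ge0 // mulr_ge0.
- move=> j hj; rewrite xD yD; have [a1 a2] := P3 j hj; have [b1 b2] := Q3 j hj.
  by split; rewrite addr_ge0 // mulr_ge0.
- move=> j hj; have h1 := P4 j hj; have h2 := Q4 j hj.
  under eq_bigr => i _ do rewrite xD.
  under [X in _ - X]eq_bigr => i _ do rewrite yD.
  rewrite !big_split /= -!mulr_sumr zD.
  set a := \sum_(0 <= i < j - 1) xc p _; set b := \sum_(0 <= i < j - 1) xc q _.
  set c := \sum_(1 <= i < j.+1) yc p _; set e := \sum_(1 <= i < j.+1) yc q _.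
  rewrite (_ : _ + _ - _ = t * (j%:R * (zc p + d%:R - 1 - j%:R) + a - c)
     + (1 - t) * (j%:R * (zc q + d%:R - 1 - j%:R) + b - e)); last by ring.
  by rewrite addr_ge0 // mulr_ge0.
- under [X in _ - X]eq_bigr => i _ do rewrite xD.
  under [X in X - _]eq_bigr => i _ do rewrite yD.
  rewrite !big_split /= -!mulr_sumr zD.
  move: P5 Q5.
  set a := \sum_(1 <= i < d - 1) xc p _; set b := \sum_(1 <= i < d - 1) xc q _.
  set c := \sum_(1 <= i < d - 1) yc p _; set e := \sum_(1 <= i < d - 1) yc q _.
  move=> h1 h2.
  have -> : t * c + (1 - t) * e - (t * a + (1 - t) * b) = t * (c - a) + (1 - t) * (e - b) by ring.
  rewrite h1 h2; ring.
Qed.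

Lemma finite_int (R : realFieldType) d (hd : (3 <= d)%N) :
  exists s : seq 'rV[R]_(dimP d),
     forall p : 'rV[R]_(dimP d), inPd p -> is_int_point p -> p \in s.
Proof.
pose B := (2 * d)%N.
exists [seq \row_(i < dimP d) (((f i : nat)%:R : R) - B%:R) | f : {ffun 'I_(dimP d) -> 'I_(4 * d).+1} <- enum {ffun 'I_(dimP d) -> 'I_(4 * d).+1}].
move=> p hp hint.
have [hb hz] := @box' _ _ hd _ hp.
have hB : B%:R = 2 * d%:R :> R by rewrite /B natrM.
have d0 : 3 <= d%:R :> R by rewrite (ler_nat R 3 d).
have bound : forall i : 'I_(dimP d), - B%:R <= p ord0 i <= B%:R.
  move=> i; rewrite -coordp_ord hB.
  case: (ltnP i (2 * d - 4)) => h.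
    case/andP: (hb i h) => h1 h2; move: h1 h2; set c := coordp _ _; move: d0; set D := (d%:R : R); move=> *; apply/andP; split; lra.
  have hi : nat_of_ord i = (2 * d - 4)%N.
    have := ltn_ord i; rewrite /dimP; move: h; clear; move: (nat_of_ord i) => k; lia.
  rewrite hi -/(zc p); case/andP: hz => h1 h2; move: h1 h2; set c := zc _; move: d0; set D := (d%:R : R); move=> *; apply/andP; split; lra.
have [m hm] := fin_all_exists hint.
have mb : forall i, (- (B%:Z) <= m i <= B%:Z)%R.
  move=> i; have := bound i; rewrite hm.
  rewrite -[B%:R]/((B%:Z)%:~R) -mulrNz.
  by rewrite !ler_int.
apply/mapP; exists [ffun i => inord (absz (m i + B%:Z))].
  by rewrite mem_enum.
apply/rowP => i; rewrite !mxE ffunE inordK.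
  rewrite natr_absz ger0_norm; last by have := mb i; lia.
  by rewrite intrD hm addrK.
have := mb i; rewrite /B; lia.
Qed.

Theorem corollary5p15 (R : realFieldType) (d : nat) (hd : (3 <= d)%N) :
  (forall p : 'rV[R]_(dimP d), inPd p -> inBox p) /\
  (forall (p q : 'rV[R]_(dimP d)) (t : R), inPd p -> inPd q ->
     0 <= t <= 1 -> inPd (t *: p + (1 - t) *: q)) /\
  (exists s : seq 'rV[R]_(dimP d),
     forall p : 'rV[R]_(dimP d), inPd p -> is_int_point p -> p \in s).
Proof.
split; first by move=> p; apply: box'.
split; first by move=> p q t; apply: convex.
exact: finite_int.
Qed.
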